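(* Let $G$ be a finitely generated torsion-free nilpotent group of nilpotency class $2$ with an involution $\ast$. Then $G$ contains a $\ast$-invariant Heisenberg subgroup; more precisely, there exist $x,y\in G$ with $[x,y]\ne 1$, $x^\ast\in\{x,x^{-1}\}$ and $y^\ast\in\{y,y^{-1}\}$.
   Context: An involution on a group is an anti-automorphism of order $2$. Commutators are $[x,y]=x^{-1}y^{-1}xy$. In a torsion-free group, two noncommuting elements whose commutator commutes with both generate a Heisenberg group $\langle x,y : [x,[x,y]]=[y,[x,y]]=1\rangle$. *)

(* Defs.v *)
From Stdlib Require Import List.
Import ListNotations.

Section GroupDefs.
Context {T : Type} (mul : T -> T -> T) (inv : T -> T) (one : T).

Definition is_group : Prop :=
  (forall x y z, mul x (mul y z) = mul (mul x y) z) /\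
  (forall x, mul one x = x) /\ (forall x, mul x one = x) /\
  (forall x, mul (inv x) x = one) /\ (forall x, mul x (inv x) = one).

Fixpoint gpow (x : T) (n : nat) : T :=
  match n with O => one | S k => mul x (gpow x k) end.

Definition comm (x y : T) : T := mul (mul (mul (inv x) (inv y)) x) y.

Inductive gen_by (S : T -> Prop) : T -> Prop :=
| gen_one : gen_by S one
| gen_base : forall x, S x -> gen_by S x
| gen_mul : forall x y, gen_by S x -> gen_by S y -> gen_by S (mul x y)
| gen_inv : forall x, gen_by S x -> gen_by S (inv x).

Definition finitely_generated : Prop :=
  exists gens : list T, forall g, gen_by (fun x => In x gens) g.

Definition torsion_free : Prop :=
  forall x n, 0 < n -> gpow x n = one -> x = one.

Definition nilpotent_class2 : Prop :=
  (forall x y z, comm (comm x y) z = one) /\ (exists x y, comm x y <> one).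

Definition is_involution (star : T -> T) : Prop :=
  (forall x y, star (mul x y) = mul (star y) (star x)) /\
  (forall x, star (star x) = x) /\
  (exists x, star x <> x).
End GroupDefs.

(* Main.v *)
Require Import Defs.
From Stdlib Require Import List Classical Lia.

Section Grp.
Context {T : Type} (mul : T -> T -> T) (inv : T -> T) (one : T).
Hypothesis assoc : forall x y z, mul x (mul y z) = mul (mul x y) z.
Hypothesis idl : forall x, mul one x = x.
Hypothesis idr : forall x, mul x one = x.
Hypothesis invl : forall x, mul (inv x) x = one.
Hypothesis invr : forall x, mul x (inv x) = one.
Hypothesis C2 : forall x y z, comm mul inv (comm mul inv x y) z = one.
Variable star : T -> T.
Hypothesis sm : forall x y, star (mul x y) = mul (star y) (star x).
Hypothesis ss : forall x, star (star x) = x.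

Local Notation cm := (comm mul inv).
Local Notation pw := (gpow mul one).

Lemma cancel_l x y : mul (inv x) (mul x y) = y.
Proof. rewrite assoc, invl, idl. reflexivity. Qed.
Lemma cancel_l' x y : mul x (mul (inv x) y) = y.
Proof. rewrite assoc, invr, idl. reflexivity. Qed.
Lemma mul_left_inj z x y : mul z x = mul z y -> x = y.
Proof. intro H. rewrite <- (cancel_l z x), H, cancel_l. reflexivity. Qed.
Lemma inv_unique x y : mul x y = one -> y = inv x.
Proof. intro H. rewrite <- (cancel_l x y), H, idr. reflexivity. Qed.
Lemma inv_inv x : inv (inv x) = x.
Proof. symmetry. apply inv_unique. apply invl. Qed.
Lemma inv_one : inv one = one.
Proof. symmetry. apply inv_unique. apply idl. Qed.
Lemma inv_mul x y : inv (mul x y) = mul (inv y) (inv x).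
Proof. symmetry. apply inv_unique. rewrite <- assoc, cancel_l', invr. reflexivity. Qed.

Lemma comm_char u h k : mul u h = mul (mul h u) k -> cm u h = k.
Proof.
  intro H. unfold comm. rewrite <- !assoc. rewrite H.
  rewrite <- (assoc h u k), cancel_l, cancel_l. reflexivity.
Qed.

Lemma swap x y : mul x y = mul (mul y x) (cm x y).
Proof.
  unfold comm. rewrite <- !assoc. rewrite cancel_l', cancel_l'. reflexivity.
Qed.

Definition central k := forall z, mul k z = mul z k.

Lemma comm1_commute u v : cm u v = one -> mul u v = mul v u.
Proof. intro H. rewrite swap, H, idr. reflexivity. Qed.

Lemma comm_central x y : central (cm x y).
Proof. intro z. apply comm1_commute, C2. Qed.

Lemma comm_mul_l x y h : cm (mul x y) h = mul (cm x h) (cm y h).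
Proof.
  apply comm_char.
  rewrite <- (assoc x y h), (swap y h), (assoc x (mul h y)), (assoc x h y), (swap x h).
  rewrite <- (assoc (mul h x) (cm x h) y), (comm_central x h y).
  rewrite (assoc (mul h x) y (cm x h)).
  rewrite <- (assoc (mul (mul h x) y) (cm x h) (cm y h)).
  rewrite <- (assoc h x y). reflexivity.
Qed.

Lemma comm_mul_r h x y : cm h (mul x y) = mul (cm h x) (cm h y).
Proof.
  apply comm_char.
  rewrite (assoc h x y), (swap h x).
  rewrite <- (assoc (mul x h) (cm h x) y), (comm_central h x y).
  rewrite (assoc (mul x h) y (cm h x)), <- (assoc x h y), (swap h y).
  rewrite (assoc x (mul y h) (cm h y)), (assoc x y h).
  rewrite <- (assoc (mul (mul x y) h) (cm h y) (cm h x)), (comm_central h y (cm h x)).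
  reflexivity.
Qed.

Lemma comm_one_l h : cm one h = one.
Proof. apply comm_char. rewrite idl, !idr. reflexivity. Qed.
Lemma comm_one_r h : cm h one = one.
Proof. apply comm_char. rewrite idl, !idr. reflexivity. Qed.

Lemma comm_inv_l x h : cm (inv x) h = inv (cm x h).
Proof.
  apply inv_unique. rewrite <- comm_mul_l, invr, comm_one_l. reflexivity.
Qed.

Lemma comm_pow_l x h n : cm (pw x n) h = pw (cm x h) n.
Proof.
  induction n as [|n IH]; simpl.
  - apply comm_one_l.
  - rewrite comm_mul_l, IH. reflexivity.
Qed.

Lemma comm_pow_r x h n : cm h (pw x n) = pw (cm h x) n.
Proof.
  induction n as [|n IH]; simpl.
  - apply comm_one_r.
  - rewrite comm_mul_r, IH. reflexivity.
Qed.

Lemma gpow_add x n m : pw x (n + m) = mul (pw x n) (pw x m).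
Proof.
  induction n as [|n IH]; simpl.
  - rewrite idl. reflexivity.
  - rewrite IH, assoc. reflexivity.
Qed.

Lemma gpow_mul x n m : pw (pw x n) m = pw x (m * n).
Proof.
  induction m as [|m IH]; simpl.
  - reflexivity.
  - rewrite IH, gpow_add. reflexivity.
Qed.

Lemma comm_sym x y : cm x y = one -> cm y x = one.
Proof.
  intro H. apply comm_char. rewrite idr. symmetry. apply comm1_commute, H.
Qed.

Lemma star_one : star one = one.
Proof.
  apply (mul_left_inj (star one)). rewrite idr, <- sm, idl. reflexivity.
Qed.

Lemma star_inv x : star (inv x) = inv (star x).
Proof. apply inv_unique. rewrite <- sm, invl, star_one. reflexivity. Qed.

Definition sym g := mul g (star g).
Definition tt g := mul g (inv (star g)).
Definition cc g := mul (tt g) (star (tt g)).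
Definition asym g := mul (mul (tt g) (tt g)) (inv (cc g)).

Lemma sym_star g : star (sym g) = sym g.
Proof. unfold sym. rewrite sm, ss. reflexivity. Qed.

Lemma cc_comm g : cc g = cm (inv g) (star g).
Proof.
  unfold cc, tt, comm. rewrite sm, star_inv, ss, inv_inv. rewrite !assoc. reflexivity.
Qed.

Lemma cc_central g : central (cc g).
Proof. rewrite cc_comm. apply comm_central. Qed.

Lemma cc_star g : star (cc g) = cc g.
Proof. unfold cc. rewrite sm, ss. reflexivity. Qed.

Lemma tt_star g : star (tt g) = mul (inv (tt g)) (cc g).
Proof. unfold cc. rewrite cancel_l. reflexivity. Qed.

Lemma asym_star g : star (asym g) = inv (asym g).
Proof.
  unfold asym. rewrite sm, sm, star_inv, cc_star, tt_star, inv_mul, inv_inv, inv_mul.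
  rewrite <- (cc_central g (inv (tt g))).
  rewrite !assoc, invl, idl.
  rewrite <- (cc_central g (inv (tt g))). reflexivity.
Qed.

Lemma key g h : cm (sym g) h = one -> cm (asym g) h = one -> pw (cm g h) 4 = one.
Proof.
  intros H1 H2. unfold sym in H1. rewrite comm_mul_l in H1.
  unfold asym in H2. rewrite comm_mul_l, comm_inv_l, cc_comm, C2, inv_one, idr in H2.
  unfold tt in H2. rewrite comm_mul_l, comm_mul_l, comm_inv_l in H2.
  apply inv_unique in H1. rewrite H1, inv_inv in H2.
  simpl. rewrite idr. rewrite !assoc in H2. rewrite !assoc. exact H2.
Qed.

Hypothesis tf : forall x n, 0 < n -> pw x n = one -> x = one.

Lemma main_sec a b : cm a b <> one ->
  exists x y : T,
    cm x y <> one /\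
    (star x = x \/ star x = inv x) /\
    (star y = y \/ star y = inv y).
Proof.
  intro Hab.
  destruct (classic (cm (sym a) (sym b) = one)) as [E1|E1];
    [| exists (sym a), (sym b); split; [exact E1| split; left; apply sym_star]].
  destruct (classic (cm (sym a) (asym b) = one)) as [E2|E2];
    [| exists (sym a), (asym b); split; [exact E2| split; [left; apply sym_star | right; apply asym_star]]].
  destruct (classic (cm (asym a) (sym b) = one)) as [E3|E3];
    [| exists (asym a), (sym b); split; [exact E3| split; [right; apply asym_star | left; apply sym_star]]].
  destruct (classic (cm (asym a) (asym b) = one)) as [E4|E4];
    [| exists (asym a), (asym b); split; [exact E4| split; right; apply asym_star]].
  exfalso. apply Hab.
  assert (K1 : cm (sym a) (pw b 4) = one).
  { apply comm_sym. rewrite comm_pow_l. apply key; apply comm_sym; assumption. }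
  assert (K2 : cm (asym a) (pw b 4) = one).
  { apply comm_sym. rewrite comm_pow_l. apply key; apply comm_sym; assumption. }
  pose proof (key a (pw b 4) K1 K2) as K.
  rewrite comm_pow_r, gpow_mul in K.
  apply (tf _ (4 * 4)); [simpl; lia | exact K].
Qed.
End Grp.

Theorem lemma2p3 (T : Type) (mul : T -> T -> T) (inv : T -> T) (one : T)
  (star : T -> T) :
  is_group mul inv one ->
  finitely_generated mul inv one ->
  torsion_free mul one ->
  nilpotent_class2 mul inv one ->
  is_involution mul star ->
  exists x y : T,
    comm mul inv x y <> one /\
    (star x = x \/ star x = inv x) /\
    (star y = y \/ star y = inv y).
Proof.
  intros [Ha [Hl [Hr [Hil Hir]]]] _ Htf [HC [a [b Hab]]] [Hsm [Hss _]].
  exact (main_sec mul inv one Ha Hl Hr Hil Hir HC star Hsm Hss Htf a b Hab).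
Qed.
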